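(* Let $\Gamma$ be a nontrivial standard graph and let $f$ be a non-constant real eigenfunction of $\Gamma$. Then $f$ is a Morse eigenfunction if and only if there is no edge $e$ of $\Gamma$ with $f|_e\equiv0$.
   Context: A metric graph is a finite connected graph $\Gamma=(\mathcal{V},\mathcal{E})$ (loops allowed) in which each edge $e$ is identified with an interval $[0,L_e]$, $L_e>0$. The Laplacian acts as $f|_e\mapsto -\frac{d^2}{dx_e^2}f|_e$ on functions in $\bigoplus_{e}H^2([0,L_e])$ satisfying Neumann (Kirchhoff) vertex conditions at every vertex $v$: $f$ is continuous at $v$ and the sum over edges incident to $v$ of the outgoing derivatives of $f$ at $v$ is zero. Such a graph is called standard; it is assumed to have no vertices of degree two, and it is nontrivial if it is not a single loop. An eigenfunction $f$ is called Morse if for each edge $e$, $f|_e$ is a Morse function, i.e. at no interior point of $e$ do both $f|_e'$ and $f|_e''$ vanish. *)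

(* Defs.v *)
From HB Require Import structures.
From mathcomp Require Import all_boot all_order all_algebra.
From mathcomp Require Import all_classical all_reals all_analysis.
Set Implicit Arguments. Unset Strict Implicit. Unset Printing Implicit Defensive.
Import Order.TTheory GRing.Theory Num.Theory.
Import numFieldNormedType.Exports.
Local Open Scope ring_scope.

(* A finite metric graph: finite vertex and edge types; each edge e is
   identified with [0, len e], its endpoint 0 is [src e], its endpoint
   [len e] is [tgt e] (loops: src e = tgt e). *)
Record metric_graph (R : realType) := MetricGraph {
  vertex : finType;
  edge : finType;
  src : edge -> vertex;
  tgt : edge -> vertex;
  len : edge -> R;
  len_gt0 : forall e, 0 < len e
}.

Section MG.
Variables (R : realType) (G : metric_graph R).

Definition adj : rel (vertex G) := fun u w =>
  [exists e, ((src e == u) && (tgt e == w)) || ((src e == w) && (tgt e == u))].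

Definition connected_graph : Prop := forall u w : vertex G, connect adj u w.

(* degree: number of edge-ends at v (a loop counts twice) *)
Definition degree (v : vertex G) : nat :=
  (#|[set e | src e == v]| + #|[set e | tgt e == v]|)%N.

Definition standard : Prop :=
  connected_graph /\ forall v, degree v <> 2%N.

Definition single_loop : Prop :=
  #|edge G| = 1%N /\ (forall e : edge G, src e = tgt e) /\ #|vertex G| = 1%N.

Definition nontrivial : Prop := ~ single_loop.

Definition on_edge (e : edge G) (x : R) : Prop := 0 <= x <= len e.
Definition in_edge (e : edge G) (x : R) : Prop := 0 < x < len e.

(* f : edge G -> R -> R, f e is (an extension to R of) f|_e on [0, len e].
   Real eigenfunction of the Neumann-Kirchhoff Laplacian with eigenvalue lam:
   on each edge f e is twice differentiable on [0, len e] with -f'' = lam f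
   (every H^2 solution of this ODE is classical and extends to R),
   f is continuous at each vertex, and the sum of outgoing derivatives
   at each vertex vanishes. *)
Definition is_eigenfunction (f : edge G -> R -> R) (lam : R) : Prop :=
  (forall e x, on_edge e x ->
     derivable (f e) x 1 /\ derivable (derive1 (f e)) x 1 /\
     - derive1 (derive1 (f e)) x = lam * f e x) /\
  (forall v : vertex G, exists c : R,
     (forall e, src e = v -> f e 0 = c) /\
     (forall e, tgt e = v -> f e (len e) = c)) /\
  (forall v : vertex G,
     \sum_(e | src e == v) derive1 (f e) 0
     + \sum_(e | tgt e == v) (- derive1 (f e) (len e)) = 0).

Definition real_eigenfunction (f : edge G -> R -> R) : Prop :=
  exists lam : R, is_eigenfunction f lam.

Definition nonconstant (f : edge G -> R -> R) : Prop :=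
  exists e1 x1 e2 x2, on_edge e1 x1 /\ on_edge e2 x2 /\ f e1 x1 <> f e2 x2.

Definition morse (f : edge G -> R -> R) : Prop :=
  forall e x, in_edge e x ->
    ~ (derive1 (f e) x = 0 /\ derive1 (derive1 (f e)) x = 0).

Definition vanishes_on_edge (f : edge G -> R -> R) (e : edge G) : Prop :=
  forall x, on_edge e x -> f e x = 0.

End MG.

(* Main.v *)
Require Import Defs.
From HB Require Import structures.
From mathcomp Require Import all_boot all_order all_algebra.
From mathcomp Require Import all_classical all_reals all_analysis.
From mathcomp Require Import ring lra.
Set Implicit Arguments. Unset Strict Implicit. Unset Printing Implicit Defensive.
Import Order.TTheory GRing.Theory Num.Theory.
Import numFieldNormedType.Exports.
Local Open Scope classical_set_scope.
Local Open Scope ring_scope.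

Section H.
Variable R : realType.
Lemma msq (x : R) : 0 <= x * x. Proof. by rewrite -expr2 sqr_ge0. Qed.

Lemma mvt' (h : R -> R) a b : a < b -> (forall x, a <= x <= b -> derivable h x 1) ->
  exists c, a < c < b /\ h b - h a = derive1 h c * (b - a).
Proof.
move=> ab dh.
have H1 : forall x, x \in `]a, b[%R -> is_derive x 1 h (derive1 h x).
  move=> x; rewrite in_itv /= => /andP[ax xb].
  by rewrite derive1E; apply: derivableP; apply: dh; rewrite (ltW ax) (ltW xb).
have H2 : {within `[a, b], continuous h}.
  by apply: derivable_within_continuous => y; rewrite in_itv /=; exact: dh.
have [c cab ->] := MVT ab H1 H2.
by exists c; split => //; move: cab; rewrite in_itv.
Qed.

Lemma phi_derive (E : R -> R) (K s : R) : derivable E s 1 ->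
  is_derive s 1 (fun t => E t * expR (K * t)) (E s * (expR (K * s) * K) + expR (K * s) * derive1 E s).
Proof.
move=> dE.
have h1 : is_derive s 1 E (derive1 E s) by rewrite derive1E; apply: derivableP.
have h2 : is_derive s 1 (fun t => K * t) K.
  have := is_deriveZ K (is_derive_id s (1:R)).
  by rewrite /GRing.scale /= mulr1.
have h3 : is_derive s 1 (expR \o (fun t => K * t)) (expR (K * s) * K).
  by apply: is_derive1_comp.
have := is_deriveM h1 h3.
by [].
Qed.

Lemma phi_d1 (E : R -> R) (k c : R) : derivable E c 1 ->
  derive1 (fun s => E s * expR (k * s)) c = expR (k * c) * (k * E c + derive1 E c).
Proof.
move=> dE; have H := phi_derive k dE; rewrite derive1E derive_val.
ring.
Qed.

Lemma phi_der (E : R -> R) (k c : R) : derivable E c 1 ->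
  derivable (fun s => E s * expR (k * s)) c 1.
Proof. by move=> dE; have [] := phi_derive k dE. Qed.

Lemma gron (E : R -> R) (K a b x0 : R) :
 (forall x, a <= x <= b -> derivable E x 1) ->
 (forall x, a <= x <= b -> 0 <= E x) ->
 (forall x, a <= x <= b -> `|derive1 E x| <= K * E x) ->
 a <= x0 <= b -> E x0 = 0 -> forall t, a <= t <= b -> E t = 0.
Proof.
move=> dE E0 EK /andP[ax0 x0b] Ex0 t /andP[ta tb].
apply/eqP; rewrite eq_le E0 ?ta ?tb // andbT.
case: (ltgtP t x0) => [tx0|x0t|->]; last by rewrite Ex0.
- have [|c [/andP[tc cx0] Hc]] := @mvt' (fun s => E s * expR (K * s)) t x0 tx0.
    move=> y /andP[ty yx0]; apply: phi_der; apply: dE.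
    by rewrite (le_trans ta ty) (le_trans yx0 x0b).
  have cab : a <= c <= b by rewrite (le_trans ta (ltW tc)) (le_trans (ltW cx0) x0b).
  move: Hc; rewrite phi_d1; last exact: dE.
  rewrite Ex0 mul0r sub0r => Hc.
  have : 0 <= expR (K * c) * (K * E c + derive1 E c) * (x0 - t).
    apply: mulr_ge0; last by rewrite subr_ge0 ltW.
    apply: mulr_ge0; first exact: expR_ge0.
    have := EK c cab; rewrite ler_norml => /andP[h1 _].
    lra.
  rewrite -Hc oppr_ge0 => h.
  by rewrite -(@pmulr_lle0 _ (expR (K * t))) ?expR_gt0 // mulrC.
- have [|c [/andP[x0c ct] Hc]] := @mvt' (fun s => E s * expR ((- K) * s)) x0 t x0t.
    move=> y /andP[ty yx0]; apply: phi_der; apply: dE.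
    by rewrite (le_trans ax0 ty) (le_trans yx0 tb).
  have cab : a <= c <= b by rewrite (le_trans ax0 (ltW x0c)) (le_trans (ltW ct) tb).
  move: Hc; rewrite phi_d1; last exact: dE.
  rewrite Ex0 mul0r subr0 => Hc.
  have : expR ((- K) * c) * ((- K) * E c + derive1 E c) * (t - x0) <= 0.
    apply: mulr_le0_ge0; last by rewrite subr_ge0 ltW.
    apply: mulr_ge0_le0; first exact: expR_ge0.
    have := EK c cab; rewrite ler_norml => /andP[_ h2].
    lra.
  rewrite -Hc => h.
  by rewrite -(@pmulr_lle0 _ (expR ((- K) * t))) ?expR_gt0 // mulrC.
Qed.

Lemma zero_near (h : R -> R) (L x : R) : (forall y, 0 < y < L -> h y = 0) ->
  0 < x < L -> derive1 h x = 0.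
Proof.
move=> H hx; rewrite derive1E (@near_eq_derive _ _ _ h (cst 0)) ?derive_cst //.
have := @near_in_itvoo R 0 L x; rewrite in_itv /= => /(_ hx) N.
by apply: filterS N => y; rewrite in_itv /=; exact: H.
Qed.

Lemma ode_zero (u : R -> R) (lam L x0 : R) :
  (forall x, 0 <= x <= L -> derivable u x 1 /\ derivable (derive1 u) x 1 /\
     - derive1 (derive1 u) x = lam * u x) ->
  0 <= x0 <= L -> u x0 = 0 -> derive1 u x0 = 0 -> forall t, 0 <= t <= L -> u t = 0.
Proof.
move=> Hu hx0 u0 du0 t ht.
pose E := fun s => u s * u s + derive1 u s * derive1 u s.
have dE : forall x, 0 <= x <= L -> is_derive x 1 E
   (u x * derive1 u x + u x * derive1 u x +
    (derive1 u x * derive1 (derive1 u) x + derive1 u x * derive1 (derive1 u) x)).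
  move=> x hx; have [d1 [d2 _]] := Hu x hx.
  have h1 : is_derive x 1 u (derive1 u x) by rewrite derive1E; apply: derivableP.
  have h2 : is_derive x 1 (derive1 u) (derive1 (derive1 u) x)
    by rewrite derive1E; apply: derivableP.
  have := is_deriveD (is_deriveM h1 h1) (is_deriveM h2 h2).
  by [].
have := @gron E (`|1 - lam|) 0 L x0.
have E0 : E x0 = 0 by rewrite /E u0 du0 mulr0 addr0.
move=> /(_ _ _ _ hx0 E0 t ht) => HE.
have : E t = 0.
  apply: HE.
  - by move=> x hx; have [] := dE x hx.
  - by move=> x _; rewrite /E addr_ge0 // msq.
  - move=> x hx; have [_ [_ hu]] := Hu x hx.
    have D := dE x hx; rewrite derive1E derive_val.
    have -> : derive1 (derive1 u) x = - (lam * u x) by rewrite -hu opprK.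
    rewrite /E.
    have -> : u x * derive1 u x + u x * derive1 u x +
      (derive1 u x * - (lam * u x) + derive1 u x * - (lam * u x)) =
      2 * (u x * derive1 u x) * (1 - lam) by ring.
    rewrite normrM normrM [`|2|]ger0_norm // mulrC.
    apply: ler_wpM2l; first exact: normr_ge0.
    rewrite normrM -(ger0_norm (msq (u x))) -(ger0_norm (msq (derive1 u x))).
    rewrite !normrM.
    have := sqr_ge0 (`|u x| - `|derive1 u x|); rewrite expr2. lra.
rewrite /E => Et.
have := msq (u t); have := msq (derive1 u t) => h1 h2.
have : u t * u t = 0 by lra.
by move/eqP; rewrite mulf_eq0 orbb => /eqP.
Qed.

Lemma edge_lin (u : R -> R) (L : R) :
  (forall x, 0 <= x <= L -> derivable u x 1 /\ derivable (derive1 u) x 1 /\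
     - derive1 (derive1 u) x = 0 * u x) ->
  forall t, 0 <= t <= L -> derive1 u t = derive1 u 0 /\ u t = u 0 + derive1 u 0 * t.
Proof.
move=> Hu t /andP[t0 tL].
have [->|t0'] := eqVneq t 0; first by rewrite mulr0 addr0.
have tpos : 0 < t by rewrite lt_def t0' t0.
have Hy : forall y, 0 <= y <= t -> 0 <= y <= L.
  by move=> y /andP[y0 yt]; rewrite y0 (le_trans yt tL).
have d2 : forall y, 0 <= y <= t -> derivable (derive1 u) y 1 /\ derive1 (derive1 u) y = 0.
  move=> y /Hy /Hu [_ [h1 h2]]; split => //.
  by rewrite mul0r in h2; rewrite -[LHS]opprK h2 oppr0.
have cst1 : forall y, 0 <= y <= t -> derive1 u y = derive1 u 0.
  move=> y /andP[y0 yt]; have [->|y0'] := eqVneq y 0; first by [].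
  have ypos : 0 < y by rewrite lt_def y0' y0.
  have [|c [/andP[c0 cy] H]] := @mvt' (derive1 u) 0 y ypos.
    by move=> z /andP[z0 zy]; have /d2[] // : 0 <= z <= t by rewrite z0 (le_trans zy yt).
  have [_ E0] : derivable (derive1 u) c 1 /\ derive1 (derive1 u) c = 0.
    by apply: d2; rewrite (ltW c0) (le_trans (ltW cy) yt).
  by apply/eqP; rewrite -subr_eq0 H E0 mul0r.
split; first by apply: cst1; rewrite t0 lexx.
have [|c [/andP[c0 ct] H]] := @mvt' u 0 t tpos.
  by move=> z hz; have [] := Hu z (Hy z hz).
rewrite cst1 in H; last by rewrite (ltW c0) (ltW ct).
by apply/eqP; rewrite addrC -subr_eq H subr0.
Qed.

Lemma lam0_false (G : metric_graph R) (f : edge G -> R -> R) :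
  connected_graph G -> is_eigenfunction f 0 -> nonconstant f -> False.
Proof.
move=> conn [Hode [Hcont Hkir]] [e1 [x1 [e2 [x2 [oo1 [oo2 neq]]]]]].
have [c Hc] := boolp.choice Hcont.
pose s e := derive1 (f e) 0.
have Hs : forall e t, on_edge e t -> derive1 (f e) t = s e /\ f e t = f e 0 + s e * t.
  by move=> e t ht; apply: (@edge_lin (f e) (len e)) => // x hx; apply: Hode.
have oL : forall e : edge G, on_edge e (len e).
  by move=> e; rewrite /on_edge lexx ltW ?len_gt0.
have o0 : forall e : edge G, on_edge e 0.
  by move=> e; rewrite /on_edge lexx ltW ?len_gt0.
have K : forall v, \sum_(e | src e == v) s e + \sum_(e | tgt e == v) - s e = 0.
  move=> v; rewrite -[RHS](Hkir v); congr (_ + _); apply: eq_bigr => e _.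
  by have [-> _] := Hs e _ (oL e).
have S0 : \sum_v c v * (\sum_(e | src e == v) s e + \sum_(e | tgt e == v) - s e) = 0.
  by rewrite big1 // => v _; rewrite K mulr0.
have Ssrc : \sum_v c v * (\sum_(e | src e == v) s e) = \sum_e c (src e) * s e.
  rewrite (partition_big (@src _ G) xpredT) //=; apply: eq_bigr => v _.
  by rewrite mulr_sumr; apply: eq_bigr => e /eqP ->.
have Stgt : \sum_v c v * (\sum_(e | tgt e == v) - s e) = \sum_e c (tgt e) * - s e.
  rewrite (partition_big (@tgt _ G) xpredT) //=; apply: eq_bigr => v _.
  by rewrite mulr_sumr; apply: eq_bigr => e /eqP ->.
have Sall : \sum_e len e * (s e * s e) = 0.
  have : \sum_e (c (src e) * s e + c (tgt e) * - s e) = 0.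
    by rewrite big_split /= -Ssrc -Stgt -big_split /= -[RHS]S0; apply: eq_bigr => v _; rewrite mulrDr.
  move=> H; apply/eqP; rewrite -oppr_eq0 -sumrN; apply/eqP; rewrite -[RHS]H; apply: eq_bigr => e _.
  have [H1 _] := Hc (src e); have [_ H2] := Hc (tgt e).
  rewrite -(H1 e erefl) -(H2 e erefl).
  have [_ ->] := Hs e _ (oL e).
  ring.
have s0 : forall e, s e = 0.
  have pos : forall i : edge G, true -> 0 <= len i * (s i * s i).
    by move=> i _; rewrite mulr_ge0 ?msq // ltW ?len_gt0.
  move=> e; have := psumr_eq0P pos Sall.
  by move=> /(_ e isT) /eqP; rewrite mulf_eq0 gt_eqF ?len_gt0 //= mulf_eq0 orbb => /eqP.
have fc : forall e t, on_edge e t -> f e t = c (src e).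
  move=> e t ht; have [_ ->] := Hs e t ht; rewrite s0 mul0r addr0.
  by have [H1 _] := Hc (src e); rewrite (H1 e erefl).
have ce : forall e, c (src e) = c (tgt e).
  move=> e; rewrite -(fc e _ (oL e)).
  by have [_ H2] := Hc (tgt e); rewrite (H2 e erefl).
have cc : forall u w, c u = c w.
  move=> u w.
  have cl : fingraph.closed (@adj _ G) [pred v | c v == c u].
    move=> x y /existsP[e /orP[/andP[/eqP<- /eqP<-]|/andP[/eqP<- /eqP<-]]];
      by rewrite !inE ce.
  have := closed_connect cl (conn u w); rewrite !inE eqxx.
  by move=> /esym /eqP.
by apply: neq; rewrite (fc _ _ oo1) (fc _ _ oo2).
Qed.
End H.

Theorem lemma7p2 (R : realType) (G : metric_graph R) (f : edge G -> R -> R) :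
  standard G -> nontrivial G -> real_eigenfunction f -> nonconstant f ->
  (morse f <-> ~ (exists e : edge G, vanishes_on_edge f e)).
Proof.
move=> [conn _] _ [lam Heig] Hnc.
have Heig' := Heig; move: Heig' => [Hode [Hcont Hkir]].
split.
- move=> M [e V].
  have L0 := len_gt0 e.
  have V' : forall y, 0 < y < len e -> f e y = 0.
    by move=> y /andP[y0 yL]; apply: V; rewrite /on_edge (ltW y0) (ltW yL).
  apply: (M e (len e / 2)); first by rewrite /in_edge; apply/andP; split; lra.
  have hx : 0 < len e / 2 < len e by apply/andP; split; lra.
  split; first exact: zero_near V' hx.
  apply: zero_near hx => y hy; exact: zero_near V' hy.
- move=> NV e x hx [d1 d2].
  have [lam0|lamn0] := eqVneq lam 0.
    by exfalso; rewrite lam0 in Heig; exact: lam0_false conn Heig Hnc.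
  apply: NV; exists e => t ht.
  have hx' : on_edge e x by move: hx => /andP[h1 h2]; rewrite /on_edge (ltW h1) (ltW h2).
  have [_ [_ H]] := Hode e x hx'.
  have fx0 : f e x = 0.
    move: H; rewrite d2 oppr0 => /esym /eqP; rewrite mulf_eq0 (negbTE lamn0) /=.
    by move/eqP.
  by apply: (@ode_zero R (f e) lam (len e) x) => //; apply: Hode.
Qed.
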